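(* Let $N\ge 4$ and define the holomorphic map $\Phi_N\colon \mathbb{C}^N\to \mathrm{SL}_2(\mathbb{C})$ by $$\Phi_N(z_1,\dots,z_N)=M_1(z_1)M_2(z_2)\cdots M_N(z_N),$$ where for $t\in\mathbb{C}$ we set $M_j(t)=\begin{pmatrix}1&0\\ t&1\end{pmatrix}$ if $j$ is odd and $M_j(t)=\begin{pmatrix}1&t\\ 0&1\end{pmatrix}$ if $j$ is even. Then $\Phi_N$ is a submersion at a point $z\in\mathbb{C}^N$ if and only if $z\notin\{(z_1,0,\dots,0,z_N): z_1,z_N\in\mathbb{C}\}$, i.e. if and only if $z_i\neq 0$ for some $2\le i\le N-1$. *)

(* Defs.v *)
From HB Require Import structures.
From mathcomp Require Import all_boot all_order all_algebra.
From mathcomp Require Import complex.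
From mathcomp Require Import reals.
Set Implicit Arguments. Unset Strict Implicit. Unset Printing Implicit Defensive.
Import Order.TTheory GRing.Theory Num.Theory.
Local Open Scope ring_scope.

Definition Cplx (R : realType) := R[i].

Section Defs.
Variable S : comNzRingType.

Definition Mj (j : nat) (t : S) : 'M[S]_2 :=
  \matrix_(a < 2, b < 2)
    if a == b then 1
    else if odd j then (if (a == 1 :> nat) && (b == 0 :> nat) then t else 0)
    else (if (a == 0 :> nat) && (b == 1 :> nat) then t else 0).

(* Phi_N(z_1,...,z_N) = M_1(z_1) M_2(z_2) ... M_N(z_N); z_{i+1} is stored at index i *)
Definition PhiN (N : nat) (z : 'I_N -> S) : 'M[S]_2 :=
  \prod_(i < N) Mj i.+1 (z i).

End Defs.

Section Diff.
Variable C : fieldType.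

(* Differential of the polynomial map PhiN at z applied to the tangent vector v:
   d/dt Phi_N(z + t v) at t = 0 (exact derivative of the polynomial map). *)
Definition dPhiN (N : nat) (z v : 'rV[C]_N) : 'M[C]_2 :=
  map_mx (fun p : {poly C} => p^`().[0])
    (PhiN (fun i : 'I_N => (z 0 i)%:P + v 0 i *: 'X)).

(* Tangent space of SL_2(C) at A: kernel of the differential of det at A,
   i.e. { X | d/dt det(A + t X) at t = 0 equals 0 }. *)
Definition tangent_SL2 (A : 'M[C]_2) : pred 'M[C]_2 :=
  fun X => (\det (map_mx polyC A + 'X *: map_mx polyC X))^`().[0] == 0.

Definition PhiN_submersion_at (N : nat) (z : 'rV[C]_N) : Prop :=
  forall Y : 'M[C]_2, tangent_SL2 (PhiN (fun i : 'I_N => z 0 i)) Y ->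
    exists v : 'rV[C]_N, dPhiN z v = Y.

End Diff.

(* Main.v *)
Require Import Defs.
From HB Require Import structures.
From mathcomp Require Import all_boot all_order all_algebra.
From mathcomp Require Import complex.
From mathcomp Require Import reals.
From mathcomp Require Import ring zify.
Import Order.TTheory GRing.Theory Num.Theory.
Local Open Scope ring_scope.

Lemma det2 (S : comNzRingType) (A : 'M[S]_2) :
  \det A = A 0 0 * A 1 1 - A 0 1 * A 1 0.
Proof.
rewrite (expand_det_row _ 0) !big_ord_recl big_ord0 /cofactor !det_mx11 !mxE.
rewrite /= addr0 expr0 expr1 mul1r.
have -> : lift 0 0 = 1 :> 'I_2 by apply/val_inj.
have -> : lift 1 0 = 0 :> 'I_2 by apply/val_inj.
idtac.
have -> : (ord0 : 'I_2) = 0 by []. ring.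

Qed.

Lemma ord2 (i : 'I_2) : i = 0 \/ i = 1.
Proof. by case: i => [[|[|//]]] h; [left|right]; apply/val_inj. Qed.

Section MjS.
Variable S : comNzRingType.
Definition Ej (j : nat) : 'M[S]_2 :=
  \matrix_(a < 2, b < 2)
    if a == b then 0
    else if odd j then (if (a == 1 :> nat) && (b == 0 :> nat) then 1 else 0)
    else (if (a == 0 :> nat) && (b == 1 :> nat) then 1 else 0).

Ltac brute := apply/matrixP => [[[|[|//]] ?] [[|[|//]] ?]];
  rewrite ?mxE ?big_ord_recl ?big_ord0 ?mxE;
  rewrite /=.

Lemma Mj0 j : Mj j (0 : S) = 1.
Proof. brute; by case: (odd j). Qed.

Lemma MjD j (t s : S) : Mj j t * Mj j s = Mj j (t + s).
Proof. brute. all: case: (odd j) => /=. all: ring. Qed.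
Lemma MjE j (t : S) : Mj j t * Ej j = Ej j.
Proof. brute. all: case: (odd j) => /=. all: ring. Qed.
Lemma EjM j (t : S) : Ej j * Mj j t = Ej j.
Proof. brute. all: case: (odd j) => /=. all: ring. Qed.
Lemma Ej00 j : Ej j 0 0 = 0.
Proof. by rewrite mxE. Qed.
Lemma detMj j (t : S) : \det (Mj j t) = 1.
Proof. rewrite det2 !mxE /=; case: (odd j) => /=; ring. Qed.
Lemma MjV j (t : S) : Mj j (- t) * Mj j t = 1.
Proof. by rewrite MjD addNr Mj0. Qed.
Lemma MjV' j (t : S) : Mj j t * Mj j (- t) = 1.
Proof. by rewrite MjD addrN Mj0. Qed.
End MjS.
Section G2.
Variable C : fieldType.
Definition Vm (A : 'M[{poly C}]_2) : 'M[C]_2 := map_mx (fun p => p.[0]) A.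
Definition Dm (A : 'M[{poly C}]_2) : 'M[C]_2 := map_mx (fun p => p^`().[0]) A.
Lemma Vm_Mj j (c w : C) : Vm (Mj j (c%:P + w *: 'X)) = Mj j c.
Proof. apply/matrixP => a b; rewrite !mxE; repeat (case: ifP => _); by rewrite ?hornerE. Qed.
Lemma Dm_Mj j (c w : C) : Dm (Mj j (c%:P + w *: 'X)) = w *: Ej _ j.
Proof. apply/matrixP => a b; rewrite !mxE; repeat (case: ifP => _); by rewrite ?derivE ?hornerE. Qed.


Lemma Vm_mul A B : Vm (A * B) = Vm A * Vm B.
Proof.
apply/matrixP=> i j; rewrite !mxE horner_sum; apply: eq_bigr => k _.
by rewrite !mxE hornerM.
Qed.

Lemma Dm_mul A B : Dm (A * B) = Dm A * Vm B + Vm A * Dm B.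
Proof.
apply/matrixP=> i j; rewrite !mxE raddf_sum horner_sum -big_split /=.
apply: eq_bigr => k _; by rewrite !mxE derivM hornerD !hornerM.
Qed.

Lemma Vm1 : Vm 1 = 1.
Proof. by apply/matrixP=> i j; rewrite !mxE; case: (i == j); rewrite hornerE. Qed.

Lemma Dm1 : Dm 1 = 0.
Proof. by apply/matrixP=> i j; rewrite !mxE; case: (i == j); rewrite ?derivC hornerE. Qed.

Lemma Vm_prod (G : nat -> 'M[{poly C}]_2) m n :
  Vm (\prod_(m <= i < n) G i) = \prod_(m <= i < n) Vm (G i).
Proof.
elim: n => [|n IH]; first by rewrite !big_geq // Vm1.
case: (leqP m n) => h; first by rewrite !big_nat_recr //= Vm_mul IH.
by rewrite !big_geq // Vm1.
Qed.

Lemma Dm_prod (G : nat -> 'M[{poly C}]_2) n :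
  Dm (\prod_(0 <= i < n) G i) =
  \sum_(0 <= i < n) (\prod_(0 <= j < i) Vm (G j)) * Dm (G i) *
      \prod_(i.+1 <= j < n) Vm (G j).
Proof.
elim: n => [|n IH]; first by rewrite !big_geq // Dm1.
rewrite big_nat_recr // Dm_mul IH Vm_prod [in RHS]big_nat_recr //=.
rewrite [\prod_(n.+1 <= j < n.+1) _]big_geq // mulr1; congr (_ + _).
rewrite mulr_suml; apply: eq_big_nat => i /andP[_ hi].
by rewrite (big_nat_recr n i.+1 _ hi) /= !mulrA.
Qed.
End G2.
Section G3.
Variable C : fieldType.
Definition Tf (A Y : 'M[C]_2) :=
  A 0 0 * Y 1 1 + Y 0 0 * A 1 1 - A 0 1 * Y 1 0 - Y 0 1 * A 1 0.

Lemma tangentE A Y : tangent_SL2 A Y = (Tf A Y == 0).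
Proof.
rewrite /tangent_SL2 det2 !mxE !derivE !hornerE /Tf.
by congr (_ == 0); ring.
Qed.

Lemma TfM (P X Q Y : 'M[C]_2) :
  Tf (P * X * Q) (P * Y * Q) = \det P * \det Q * Tf X Y.
Proof.
rewrite /Tf !det2 !mxE !big_ord_recl !big_ord0 !mxE !big_ord_recl !big_ord0 /=.
have -> : lift ord0 ord0 = 1 :> 'I_2 by apply/val_inj.
have -> : ord0 = 0 :> 'I_2 by [].
ring.
Qed.
End G3.
Arguments Tf {C}.
Arguments Dm {C}.
Arguments Vm {C}.
Section G4.
Variable C : fieldType.
Variables (N : nat) (z v : 'rV[C]_N) (zf vf : nat -> C).
Hypothesis hz : forall i : 'I_N, z 0 i = zf i.
Hypothesis hv : forall i : 'I_N, v 0 i = vf i.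

Lemma PhiN_prod : PhiN (fun i : 'I_N => z 0 i) = \prod_(0 <= j < N) Mj j.+1 (zf j).
Proof. by rewrite /PhiN big_mkord; apply: eq_bigr => i _; rewrite hz. Qed.

Lemma dPhiN_sum : dPhiN z v =
  \sum_(0 <= i < N) (\prod_(0 <= j < i) Mj j.+1 (zf j)) * (vf i *: Ej _ i.+1)
     * \prod_(i.+1 <= j < N) Mj j.+1 (zf j).
Proof.
rewrite /dPhiN /PhiN -/(Dm _).
have -> : \prod_(i < N) Mj i.+1 ((z 0 i)%:P + v 0 i *: 'X) =
   \prod_(0 <= i < N) Mj i.+1 ((zf i)%:P + vf i *: 'X).
  by rewrite big_mkord; apply: eq_bigr => i _; rewrite hz hv.
rewrite (@Dm_prod _ (fun i => Mj i.+1 ((zf i)%:P + vf i *: 'X))).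
apply: eq_bigr => i _; rewrite Dm_Mj; congr (_ * _ * _); apply: eq_bigr => j _;
  by rewrite Vm_Mj.
Qed.
End G4.
Section G5.
Variable C : fieldType.
Lemma Ej2 j : Ej C j.+2 = Ej C j. Proof. by rewrite /Ej /= negbK. Qed.

Lemma inner (j : nat) (s : C) (U : 'M[C]_2) : s != 0 -> Tf (Mj j.+1 s) U = 0 ->
  exists a b c, a *: Ej _ j * Mj j.+1 s + b *: Ej _ j.+1 + c *: (Mj j.+1 s * Ej _ j) = U.
Proof.
move=> hs; rewrite /Tf !mxE /= => hT.
case hj: (odd j); rewrite hj /= in hT.
- have hU : U 1 0 = (U 1 1 + U 0 0) / s.
    apply/(mulIf hs); rewrite divfK //; apply/eqP; rewrite -subr_eq0 -oppr_eq0; apply/eqP.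
    rewrite -[RHS]hT; ring.
  exists (U 1 1 / s), (U 0 1), (U 0 0 / s).
  apply/matrixP => i k; case: (ord2 i) => ->; case: (ord2 k) => ->;
  rewrite !mxE !big_ord_recl !big_ord0 !mxE /= hj /= ?hU; field; exact: hs.
- have hU : U 0 1 = (U 1 1 + U 0 0) / s.
    apply/(mulIf hs); rewrite divfK //; apply/eqP; rewrite -subr_eq0 -oppr_eq0; apply/eqP.
    rewrite -[RHS]hT; ring.
  exists (U 0 0 / s), (U 1 0), (U 1 1 / s).
  apply/matrixP => i k; case: (ord2 i) => ->; case: (ord2 k) => ->;
  rewrite !mxE !big_ord_recl !big_ord0 !mxE /= hj /= ?hU; field; exact: hs.
Qed.
End G5.
Section Main.
Variable C : fieldType.

Lemma detprod (f : nat -> C) m n :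
  \det (\prod_(m <= j < n) Mj j.+1 (f j)) = 1.
Proof.
apply: (big_ind (fun M : 'M[C]_2 => \det M = 1)); first by rewrite det1.
  by move=> x y hx hy; rewrite -mulmxE det_mulmx hx hy mulr1.
by move=> i _; rewrite detMj.
Qed.

Lemma unitprod (f : nat -> C) m n :
  (\prod_(m <= j < n) Mj j.+1 (f j)) \is a GRing.unit.
Proof. by rewrite unitmxE detprod unitr1. Qed.

Variables (N : nat) (z : 'rV[C]_N) (zf : nat -> C).
Hypothesis hz : forall i : 'I_N, z 0 i = zf i.

Lemma nondeg kk : (kk.+2 < N)%N -> zf kk.+1 != 0 -> PhiN_submersion_at z.
Proof.
move=> hk hs Y; rewrite tangentE (@PhiN_prod _ _ _ _ hz) => /eqP hT.
set P := \prod_(0 <= j < kk) Mj j.+1 (zf j).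
set Q := \prod_(kk.+3 <= j < N) Mj j.+1 (zf j).
set m0 := Mj kk.+1 (zf kk).
set m1 := Mj kk.+2 (zf kk.+1).
set m2 := Mj kk.+3 (zf kk.+2).
have hA : \prod_(0 <= j < N) Mj j.+1 (zf j) = P * (m0 * m1 * m2) * Q.
  rewrite (big_cat_nat (leq0n kk) (_ : (kk <= N)%N)); last by lia.
  rewrite /= [\prod_(kk <= j < N) _]big_ltn; last by lia.
  rewrite [\prod_(kk.+1 <= j < N) _]big_ltn; last by lia.
  rewrite [\prod_(kk.+2 <= j < N) _]big_ltn; last by lia.
  by rewrite !mulrA.
set W := P^-1 * Y * Q^-1.
have hP := unitprod zf 0 kk; have hQ := unitprod zf kk.+3 N.
have hY : Y = P * W * Q by rewrite /W !mulrA mulrV // mul1r mulrVK.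
rewrite hA hY TfM !detprod !mul1r in hT.
set U := Mj kk.+1 (- zf kk) * W * Mj kk.+3 (- zf kk.+2).
have hW : W = m0 * U * m2.
  by rewrite /U /m0 /m2 !mulrA MjV' mul1r -!mulrA MjV mulr1 /W !mulrA.
rewrite hW TfM !detMj !mul1r in hT.
have [a [b [c habc]]] := @inner _ kk.+1 _ _ hs hT.
pose vf i := if i == kk then a else if i == kk.+1 then b
             else if i == kk.+2 then c else 0.
exists (\row_(i < N) vf i).
have hv : forall i : 'I_N, (\row_(i < N) vf i) 0 i = vf i by move=> i; rewrite mxE.
rewrite (@dPhiN_sum _ _ _ _ _ _ hz hv).
have vf0 i : (i < kk)%N || (kk.+2 < i)%N -> vf i = 0.
  move=> h; rewrite /vf; case: eqP => [?|_]; first by lia.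
  case: eqP => [?|_]; first by lia.
  case: eqP => [?|_]; first by lia. by [].
rewrite (big_cat_nat (leq0n kk) (_ : (kk <= N)%N)); last by lia.
rewrite /= big_nat_cond big1; last first.
  by move=> i /andP[/andP[_ hi] _]; rewrite vf0 ?hi // scale0r mulr0 mul0r.
rewrite add0r [\sum_(kk <= i < N) _]big_ltn; last by lia.
rewrite [\sum_(kk.+1 <= i < N) _]big_ltn; last by lia.
rewrite [\sum_(kk.+2 <= i < N) _]big_ltn; last by lia.
rewrite [\sum_(kk.+3 <= i < N) _](_ : _ = 0); last first.
  rewrite big_nat_cond big1 // => i /andP[/andP[hi _] _].
  by rewrite vf0 ?scale0r ?mulr0 ?mul0r //; apply/orP; right.
rewrite [\prod_(0 <= j < kk.+2) _]big_nat_recr //=.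
rewrite [\prod_(0 <= j < kk.+1) _]big_nat_recr //=.
rewrite [\prod_(kk.+1 <= j < N) _]big_ltn; last by lia.
rewrite [\prod_(kk.+2 <= j < N) _]big_ltn; last by lia.
rewrite -/P -/Q -/m0 -/m1 -/m2.
have -> : vf kk = a by rewrite /vf eqxx.
have -> : vf kk.+1 = b by rewrite /vf; case: eqP => [?|_]; [lia | rewrite eqxx].
have -> : vf kk.+2 = c.
  by rewrite /vf; case: eqP => [?|_]; [lia | case: eqP => [?|_]; [lia | rewrite eqxx]].
have m0E1 : m0 * Ej C kk.+1 = Ej C kk.+1 by rewrite MjE.
have E1m2 : Ej C kk.+1 * m2 = Ej C kk.+1 by rewrite -[in LHS](@Ej2 C kk.+1) EjM Ej2.
have hin : m0 * (a *: Ej C kk.+1 * m1 + b *: Ej C kk.+2 + c *: (m1 * Ej C kk.+1)) * m2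
   = a *: (Ej C kk.+1 * m1 * m2) + b *: (m0 * Ej C kk.+2 * m2) + c *: (m0 * m1 * Ej C kk.+1).
  rewrite !mulrDr !mulrDl; congr (_ + _ + _).
  - by rewrite -scalerAl -scalerAr -scalerAl mulrA m0E1.
  - by rewrite -scalerAr -scalerAl.
  - by rewrite -scalerAr -scalerAl -!mulrA E1m2.
rewrite hY hW -habc hin (@Ej2 C kk.+1) addr0 !mulrDr !mulrDl.
do ![rewrite -scalerAl | rewrite -scalerAr].
by rewrite !mulrA addrA.
Qed.

Definition rvf (v : 'rV[C]_N) (k : nat) : C :=
  if (insub k : option 'I_N) is Some i then v 0 i else 0.
Lemma rvfE (v : 'rV[C]_N) (i : 'I_N) : v 0 i = rvf v i.
Proof. by rewrite /rvf valK. Qed.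

Lemma deg : (4 <= N)%N -> (forall k, (1 <= k)%N -> (k.+1 < N)%N -> zf k = 0) ->
  ~ PhiN_submersion_at z.
Proof.
move=> hN hmid hsub.
set a := zf 0; set b := zf N.-1.
have Lmid i : (1 <= i)%N -> (i < N)%N -> \prod_(0 <= j < i) Mj j.+1 (zf j) = Mj 1 a.
  move=> h1 h2; rewrite big_ltn; last by lia.
  rewrite big_nat_cond big1 ?mulr1 // => j /andP[/andP[hj1 hj2] _].
  by rewrite hmid ?Mj0 //; lia.
have Rmid i : (i.+1 < N)%N -> \prod_(i.+1 <= j < N) Mj j.+1 (zf j) = Mj N.-1.+1 b.
  move=> h; rewrite (big_cat_nat (_ : (i.+1 <= N.-1)%N) (_ : (N.-1 <= N)%N));
    try lia.
  rewrite big_nat_cond big1 ?mul1r; last first.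
    by move=> j /andP[/andP[hj1 hj2] _]; rewrite hmid ?Mj0 //; lia.
  have hN' : N = N.-1.+1 by lia.
  by rewrite [X in \prod_(N.-1 <= j < X) _]hN' big_nat1 /= mul1r.
have hPhi : \prod_(0 <= j < N) Mj j.+1 (zf j) = Mj 1 a * Mj N.-1.+1 b.
  by rewrite big_ltn; [rewrite (Rmid 0) //; lia | lia].
have hleft i : (i < N)%N -> Mj 1 (- a) * \prod_(0 <= j < i) Mj j.+1 (zf j) * Ej C i.+1 = Ej C i.+1.
  case: i => [|i] h.
    by rewrite big_geq // mulr1 MjE.
  by rewrite Lmid // MjV mul1r.
have hright i : (i < N)%N -> Ej C i.+1 * \prod_(i.+1 <= j < N) Mj j.+1 (zf j) * Mj N.-1.+1 (- b) = Ej C i.+1.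
  move=> h; case: (ltnP i.+1 N) => h2.
    by rewrite Rmid // -mulrA MjV' mulr1.
  have -> : i = N.-1 by lia.
  by rewrite big_geq ?mulr1 ?EjM //; lia.
set H : 'M[C]_2 := \matrix_(i < 2, j < 2)
   (if i == j then (if (i == 0 :> nat) then 1 else -1) else 0).
pose Y0 := Mj 1 a * H * Mj N.-1.+1 b.
have hT : tangent_SL2 (PhiN (fun i : 'I_N => z 0 i)) Y0.
  rewrite tangentE (@PhiN_prod _ _ _ _ hz) hPhi.
  have -> : Mj 1 a * Mj N.-1.+1 b = Mj 1 a * 1 * Mj N.-1.+1 b by rewrite mulr1.
  rewrite /Y0 TfM !detMj !mul1r.
  by rewrite /Tf !mxE /=; apply/eqP; ring.
have [v hv] := hsub Y0 hT.
have : (Mj 1 (- a) * Y0 * Mj N.-1.+1 (- b)) 0 0 = 1.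
  by rewrite /Y0 !mulrA MjV mul1r -mulrA MjV' mulr1 mxE.
rewrite -hv (@dPhiN_sum _ _ _ _ _ _ hz (rvfE v)) mulr_sumr mulr_suml.
rewrite big_nat_cond (eq_bigr (fun i => rvf v i *: Ej C i.+1)); last first.
  move=> i /andP[/andP[_ hi] _].
  do ![rewrite -scalerAl | rewrite -scalerAr]; rewrite !mulrA hleft // hright //.
rewrite summxE big1; last by move=> i _; rewrite mxE Ej00 mulr0.
by move/esym/eqP; rewrite oner_eq0.
Qed.
End Main.

Theorem lemma1 (R : realType) (N : nat) (hN : (4 <= N)%N) (z : 'rV[Cplx R]_N) :
  PhiN_submersion_at z <->
  exists i : 'I_N, (2 <= i.+1 <= N.-1)%N /\ z 0 i != 0.
Proof.
split.
- move=> hsub.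
  case: (boolP [exists i : 'I_N, (2 <= i.+1 <= N.-1)%N && (z 0 i != 0)]).
    by case/existsP => i /andP[h1 h2]; exists i.
  move/existsPn => hn; exfalso.
  apply: (@deg _ _ z (@rvf _ _ z) (@rvfE _ _ z) hN _ hsub).
  move=> k h1 h2; have hk : (k < N)%N by lia.
  have := hn (Ordinal hk); rewrite negb_and => /orP[h|].
    by exfalso; move: h => /negP; apply; rewrite /=; apply/andP; split; lia.
  by rewrite negbK (@rvfE _ _ z (Ordinal hk)) => /eqP.
- case=> i [hi hz0].
  apply: (@nondeg _ _ z (@rvf _ _ z) (@rvfE _ _ z) i.-1); first by lia.
  have -> : i.-1.+1 = i by lia.
  by rewrite -rvfE.
Qed.
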